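(* Let $f(t)=\frac{1-e^{-t}}{t}$, let $a>0$, $b>0$, let $0<\lambda_1\le\lambda_2\le\dots\le\lambda_M$ and $0\le\bar x\le\sum_{m=1}^M\lambda_m$. Consider $$\max_{\bm c}\ \sum_{m=1}^M c_m f(a+bc_m)\quad\text{s.t.}\quad \sum_{m=1}^M c_m=\bar x,\quad 0\le c_m\le\lambda_m\ \forall m.$$ Then $g(c)=f(a+bc)+bc f'(a+bc)$ satisfies $g(c)\ge e^{-(a+bc)}>0$ and is strictly decreasing in $c\ge0$, and the problem has the unique optimal solution $c_m^*=\min\{\lambda_m,C_0\}$, $m=1,\dots,M$, where $C_0=\bar x/M$ if $\bar x/M\le\lambda_1$, and otherwise $C_0=\frac{\bar x-\sum_{i=1}^n\lambda_i}{M-n}$ for the index $n\in\{1,\dots,M-1\}$ with $\lambda_n<\frac{\bar x-\sum_{i=1}^n\lambda_i}{M-n}\le\lambda_{n+1}$ (equivalently, $C_0$ is such that $\sum_m\min\{\lambda_m,C_0\}=\bar x$).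
   Context: This is the inner problem $\mathcal{P}2.1$ of the unbiased case $B_1=\dots=B_M$, in which, for a fixed total caching density $\bar x=\sum_m c_m$, the active ratio $\rho$ is common to all groups and $\varphi_m=\pi R^2(\bar x+\lambda_B\theta_B+c_m\rho\theta_I)$; so $a=\pi R^2(\bar x+\lambda_B\theta_B)$, $b=\pi R^2\rho\theta_I$. $\lambda_m$ is the density of interested users in group $m$ and $c_m$ the caching density. *)

(* Defs.v *)
From Stdlib Require Import Reals Lra Lia.
Open Scope R_scope.

Definition fhit (t : R) : R := (1 - exp (- t)) / t.

Fixpoint rsum (n : nat) (F : nat -> R) : R :=
  match n with
  | O => 0
  | S k => rsum k F + F k
  end.

(* Objective  sum_{m} c_m f(a + b c_m)  over groups m = 0..M-1
   (group m+1 of the paper is index m here). *)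
Definition objective (M : nat) (a b : R) (c : nat -> R) : R :=
  rsum M (fun m => c m * fhit (a + b * c m)).

Definition feasible (M : nat) (lam : nat -> R) (xbar : R) (c : nat -> R) : Prop :=
  rsum M c = xbar /\ (forall m, (m < M)%nat -> 0 <= c m <= lam m).

(* Main.v *)
Require Import Defs.
From Stdlib Require Import Reals Lra Lia.
From Coquelicot Require Import Coquelicot.
Open Scope R_scope.

Definition F1 (t:R) := ((t+1)*exp(-t) - 1)/(t*t).
Definition F2 (t:R) := (2 - exp(-t)*(t*t+2*t+2))/(t*t*t).

Lemma fhit_deriv t : 0 < t -> derivable_pt_lim fhit t (F1 t).
Proof. intros Ht. apply is_derive_Reals. unfold fhit, F1. auto_derive.
  lra. field. lra. Qed.

Lemma F1_deriv t : 0 < t -> derivable_pt_lim F1 t (F2 t).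
Proof. intros Ht. apply is_derive_Reals. unfold F1, F2. auto_derive.
  nra. field. lra. Qed.

Lemma exp_quad t : 0 < t -> 1 + t + t*t/2 < exp t.
Proof. intros Ht.
  destruct (MVT_cor2 (fun x => exp x - 1 - x - x*x/2) (fun x => exp x - 1 - x) 0 t Ht)
    as [c [Hc1 Hc2]].
  { intros c _. apply is_derive_Reals. auto_derive. auto. field. }
  assert (1 + c < exp c) by (apply exp_ineq1; lra).
  rewrite exp_0 in Hc1. nra. Qed.

Lemma F2_nonneg t : 0 < t -> 0 <= F2 t.
Proof. intros Ht. unfold F2. pose proof (exp_quad t Ht).
  assert (exp (-t) * exp t = 1) by (rewrite <- exp_plus; replace (-t+t) with 0 by ring; apply exp_0).
  pose proof (exp_pos (-t)).
  apply Rdiv_le_0_compat. nra. assert (0 < t*t) by nra. nra. Qed.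

Lemma F1_mono t1 t2 : 0 < t1 -> t1 <= t2 -> F1 t1 <= F1 t2.
Proof. intros H1 H2. destruct (Req_dec t1 t2) as [->|Hne]; [lra|].
  destruct (MVT_cor2 F1 F2 t1 t2) as [c [Hc1 Hc2]]. lra.
  { intros c Hc. apply F1_deriv. lra. }
  pose proof (F2_nonneg c ltac:(lra)). nra. Qed.

Lemma F1_neg t : 0 < t -> F1 t < 0.
Proof. intros Ht. unfold F1. pose proof (exp_ineq1 t ltac:(lra)).
  assert (exp (-t) * exp t = 1) by (rewrite <- exp_plus; replace (-t+t) with 0 by ring; apply exp_0).
  pose proof (exp_pos (-t)).
  assert (0 < t*t) by nra.
  unfold Rdiv. apply Rmult_neg_pos. assert ((t+1)*exp(-t) < exp t * exp (-t)) by (apply Rmult_lt_compat_r; lra). nra. apply Rinv_0_lt_compat; lra. Qed.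

Definition G (a b c : R) := fhit (a+b*c) + b*c*F1 (a+b*c).

Lemma G_eq a b c : 0 < a + b*c -> G a b c = exp (-(a+b*c)) - a * F1 (a+b*c).
Proof. intros H. unfold G. set (t := a+b*c). replace (b*c) with (t - a) by (unfold t; ring).
  unfold fhit, F1. field. unfold t; lra. Qed.

Lemma G_decr a b c1 c2 : 0 < a -> 0 < b -> 0 <= c1 -> c1 < c2 -> G a b c2 < G a b c1.
Proof. intros ha hb h1 h2. rewrite !G_eq by nra.
  pose proof (exp_increasing (-(a+b*c2)) (-(a+b*c1)) ltac:(nra)).
  pose proof (F1_mono (a+b*c1) (a+b*c2) ltac:(nra) ltac:(nra)). nra. Qed.

Definition phi (a b c : R) := c * fhit (a+b*c).

Lemma phi_deriv a b c : 0 < a + b*c -> derivable_pt_lim (phi a b) c (G a b c).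
Proof. intros H. apply is_derive_Reals. unfold phi, G, fhit, F1. auto_derive. lra.
  field. lra. Qed.

Lemma tangent a b x y : 0 < a -> 0 < b -> 0 <= x -> 0 <= y -> x <> y ->
  phi a b y < phi a b x + G a b x * (y - x).
Proof. intros ha hb hx hy hne. destruct (Rlt_or_le x y) as [Hl|Hl].
  - destruct (MVT_cor2 (phi a b) (G a b) x y Hl) as [c [Hc1 Hc2]].
    { intros c Hc. apply phi_deriv. nra. }
    pose proof (G_decr a b x c ha hb hx ltac:(lra)). nra.
  - destruct (MVT_cor2 (phi a b) (G a b) y x ltac:(lra)) as [c [Hc1 Hc2]].
    { intros c Hc. apply phi_deriv. nra. }
    pose proof (G_decr a b c x ha hb ltac:(lra) ltac:(lra)). nra. Qed.

Lemma rsum_ext n F H : (forall m, (m < n)%nat -> F m = H m) -> rsum n F = rsum n H.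
Proof. induction n; simpl; intros E; auto. rewrite IHn by (intros; apply E; lia). rewrite E by lia. auto. Qed.

Lemma rsum_const n k : rsum n (fun _ => k) = INR n * k.
Proof. induction n; simpl rsum. simpl; ring. rewrite IHn, S_INR. ring. Qed.

Lemma rsum_add n F d : rsum (n + d) F = rsum n F + rsum d (fun i => F (n+i)%nat).
Proof. induction d. simpl. rewrite Nat.add_0_r. ring. rewrite Nat.add_succ_r. simpl. rewrite IHd. ring. Qed.

Lemma rsum_lin n F H J K : rsum n (fun m => F m + K*(H m - J m)) = rsum n F + K*(rsum n H - rsum n J).
Proof. induction n; simpl. ring. rewrite IHn. ring. Qed.

Lemma rsum_le n F H : (forall m, (m < n)%nat -> F m <= H m) -> rsum n F <= rsum n H.
Proof. induction n; simpl; intros E. lra. pose proof (IHn ltac:(intros; apply E; lia)). pose proof (E n ltac:(lia)). lra. Qed.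

Lemma rsum_lt n F H : (forall m, (m < n)%nat -> F m <= H m) -> (exists m, (m < n)%nat /\ F m < H m) -> rsum n F < rsum n H.
Proof. induction n; simpl; intros E [m [Hm Hlt]]. lia.
  destruct (Nat.eq_dec m n) as [->|Hne].
  - pose proof (rsum_le n F H ltac:(intros; apply E; lia)). lra.
  - pose proof (IHn ltac:(intros; apply E; lia) ltac:(exists m; split; [lia|auto])). pose proof (E n ltac:(lia)). lra. Qed.

Section Comb.
Variables (M : nat) (lam : nat -> R) (xbar : R).
Hypothesis hlam_sorted : forall i j, (i <= j)%nat -> (j < M)%nat -> lam i <= lam j.
Hypothesis hx1 : xbar <= rsum M lam.
Definition h (n : nat) := (xbar - rsum n lam) / INR (M - n).

Lemma step k : (k + 1 <= M - 1)%nat -> lam k < h k -> lam k < h (S k).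
Proof. intros Hk Hl. unfold h in *.
  assert (E : (M - k = S (M - S k))%nat) by lia. rewrite E, S_INR in Hl.
  set (D := INR (M - S k)) in *. assert (0 < D) by (unfold D; apply lt_0_INR; lia).
  set (X := xbar - rsum k lam) in *.
  set (q := X / (D+1)) in *. assert (X = q*(D+1)) by (unfold q; field; lra).
  assert (X > lam k * (D+1)) by nra.
  simpl rsum. apply Rmult_lt_reg_r with D; [lra|]. unfold Rdiv. rewrite Rmult_assoc, Rinv_l by lra.
  unfold X in *. lra. Qed.

Lemma last_le : (1 <= M)%nat -> h (M - 1) <= lam (M - 1).
Proof. intros HM. unfold h. replace (M - (M-1))%nat with 1%nat by lia. simpl INR.
  replace M with (S (M-1)) in hx1 by lia. simpl in hx1. lra. Qed.

Lemma find_n j : forall k, (M - 1 - k = j)%nat -> (k <= M - 1)%nat -> (1 <= M)%nat -> lam k < h k ->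
  exists n, (k + 1 <= n <= M - 1)%nat /\ lam (n-1) < h n <= lam n.
Proof. induction j; intros k Hj Hk HM Hl.
  - assert (k = M - 1)%nat by lia. subst. pose proof last_le HM. lra.
  - assert (Hk1 : (k + 1 <= M - 1)%nat) by lia.
    pose proof (step k Hk1 Hl) as Hs.
    destruct (Rle_dec (h (S k)) (lam (S k))) as [Hle|Hgt].
    + exists (S k). replace (S k - 1)%nat with k by lia. split; [lia|]. lra.
    + destruct (IHj (S k) ltac:(lia) ltac:(lia) HM ltac:(lra)) as [n [Hn1 Hn2]].
      exists n. split; [lia|auto]. Qed.
End Comb.

Lemma term_lt a b L C0 x : 0 < a -> 0 < b -> 0 < L -> 0 <= C0 -> 0 <= x <= L -> x <> Rmin L C0 ->
  phi a b x < phi a b (Rmin L C0) + G a b C0 * (x - Rmin L C0).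
Proof. intros ha hb hL hC hx hne.
  assert (Hs : 0 <= Rmin L C0) by (unfold Rmin; destruct Rle_dec; lra).
  pose proof (tangent a b (Rmin L C0) x ha hb Hs ltac:(lra) ltac:(auto)).
  assert (G a b (Rmin L C0) * (x - Rmin L C0) <= G a b C0 * (x - Rmin L C0)); [|lra].
  unfold Rmin in *. destruct Rle_dec as [Hle|Hgt]; [|lra].
  destruct (Req_dec L C0) as [->|Hne]; [lra|].
  pose proof (G_decr a b L C0 ha hb ltac:(lra) ltac:(lra)). nra. Qed.

Theorem mainTheorem6 (a b : R) (M : nat) (lam : nat -> R) (xbar : R)
  (ha : 0 < a) (hb : 0 < b) (hM : (1 <= M)%nat)
  (hlam_pos : forall m, (m < M)%nat -> 0 < lam m)
  (hlam_sorted : forall i j, (i <= j)%nat -> (j < M)%nat -> lam i <= lam j)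
  (hx0 : 0 <= xbar) (hx1 : xbar <= rsum M lam) :
  (forall c, 0 <= c ->
     (exists d, derivable_pt_lim fhit (a + b * c) d) /\
     (forall d, derivable_pt_lim fhit (a + b * c) d ->
        exp (- (a + b * c)) <= fhit (a + b * c) + b * c * d /\
        0 < exp (- (a + b * c)))) /\
  (forall c1 c2 d1 d2, 0 <= c1 -> c1 < c2 ->
     derivable_pt_lim fhit (a + b * c1) d1 ->
     derivable_pt_lim fhit (a + b * c2) d2 ->
     fhit (a + b * c2) + b * c2 * d2 < fhit (a + b * c1) + b * c1 * d1) /\
  (exists C0 : R,
     ((xbar / INR M <= lam 0%nat /\ C0 = xbar / INR M) \/
      (lam 0%nat < xbar / INR M /\
       exists n : nat, (1 <= n)%nat /\ (n <= M - 1)%nat /\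
         lam (n - 1)%nat < (xbar - rsum n lam) / INR (M - n) /\
         (xbar - rsum n lam) / INR (M - n) <= lam n /\
         C0 = (xbar - rsum n lam) / INR (M - n))) /\
     rsum M (fun m => Rmin (lam m) C0) = xbar /\
     feasible M lam xbar (fun m => Rmin (lam m) C0) /\
     (forall c, feasible M lam xbar c ->
        objective M a b c <= objective M a b (fun m => Rmin (lam m) C0)) /\
     (forall c, feasible M lam xbar c ->
        objective M a b c = objective M a b (fun m => Rmin (lam m) C0) ->
        forall m, (m < M)%nat -> c m = Rmin (lam m) C0)).
Proof.
  split.
  { intros c Hc. assert (Ht: 0 < a+b*c) by nra. split.
    - exists (F1 (a+b*c)). apply fhit_deriv; auto.
    - intros d Hd. rewrite (uniqueness_limite _ _ _ _ Hd (fhit_deriv _ Ht)).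
      split; [|apply exp_pos]. pose proof (G_eq a b c Ht). unfold G in H.
      pose proof (F1_neg _ Ht). nra. }
  split.
  { intros c1 c2 d1 d2 H1 H2 D1 D2.
    rewrite (uniqueness_limite _ _ _ _ D1 (fhit_deriv (a+b*c1) ltac:(nra))).
    rewrite (uniqueness_limite _ _ _ _ D2 (fhit_deriv (a+b*c2) ltac:(nra))).
    pose proof (G_decr a b c1 c2 ha hb H1 H2). unfold G in H. lra. }
  assert (HMpos: 0 < INR M) by (apply lt_0_INR; lia).
  assert (Hex: exists C0, ((xbar / INR M <= lam 0%nat /\ C0 = xbar / INR M) \/
      (lam 0%nat < xbar / INR M /\
       exists n : nat, (1 <= n)%nat /\ (n <= M - 1)%nat /\
         lam (n - 1)%nat < (xbar - rsum n lam) / INR (M - n) /\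
         (xbar - rsum n lam) / INR (M - n) <= lam n /\
         C0 = (xbar - rsum n lam) / INR (M - n))) /\ 0 <= C0 /\
      rsum M (fun m => Rmin (lam m) C0) = xbar).
  { destruct (Rle_dec (xbar / INR M) (lam 0%nat)) as [Hc|Hc].
    - exists (xbar/INR M). split. left; auto. split. apply Rdiv_le_0_compat; lra.
      rewrite (rsum_ext M _ (fun _ => xbar/INR M)). rewrite rsum_const. field; lra.
      intros m Hm. apply Rmin_right. pose proof (hlam_sorted 0%nat m ltac:(lia) Hm). lra.
    - assert (HM2 : (1 <= M - 1)%nat).
      { destruct (Nat.eq_dec M 1) as [E|E]; [|lia]. subst. simpl in hx1. simpl INR in Hc.
        rewrite Rdiv_1 in Hc. lra. }
      destruct (find_n M lam xbar hx1 (M-1-0)%nat 0%nat eq_refl ltac:(lia) hM) as [n [Hn1 [Hn2 Hn3]]].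
      { unfold h. rewrite Nat.sub_0_r. simpl rsum. replace (xbar - 0) with xbar by ring. lra. }
      assert (HnM : 0 < INR (M - n)) by (apply lt_0_INR; lia).
      assert (Hp : 0 < lam (n-1)%nat) by (apply hlam_pos; lia).
      exists (h M lam xbar n). split. right. split. lra. exists n. unfold h in *.
      repeat split; try lia; lra.
      split. lra.
      replace M with (n + (M-n))%nat at 1 by lia. rewrite rsum_add.
      rewrite (rsum_ext n _ lam). rewrite (rsum_ext (M-n) _ (fun _ => h M lam xbar n)).
      rewrite rsum_const. unfold h; field. lra.
      + intros i Hi. apply Rmin_right. pose proof (hlam_sorted n (n+i)%nat ltac:(lia) ltac:(lia)). lra.
      + intros m Hm. apply Rmin_left. pose proof (hlam_sorted m (n-1)%nat ltac:(lia) ltac:(lia)). lra. }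
  destruct Hex as [C0 [Hcase [HC0 Hsum]]].
  exists C0. split; [auto|]. split; [auto|].
  assert (Hfeas: feasible M lam xbar (fun m => Rmin (lam m) C0)).
  { split; auto. intros m Hm. pose proof (hlam_pos m Hm). split.
    unfold Rmin; destruct Rle_dec; lra. apply Rmin_l. }
  split; [auto|].
  assert (Key: forall c, feasible M lam xbar c -> forall m, (m < M)%nat ->
     phi a b (c m) <= phi a b (Rmin (lam m) C0) + G a b C0 * (c m - Rmin (lam m) C0) /\
     (c m <> Rmin (lam m) C0 -> phi a b (c m) < phi a b (Rmin (lam m) C0) + G a b C0 * (c m - Rmin (lam m) C0))).
  { intros c [_ Hc] m Hm. pose proof (Hc m Hm). pose proof (hlam_pos m Hm).
    assert (Hs: forall x, x <> Rmin (lam m) C0 -> phi a b x < phi a b (Rmin (lam m) C0) + G a b C0 * (x - Rmin (lam m) C0) \/ ~ (0 <= x <= lam m)).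
    { intros x Hx. destruct (Rle_dec 0 x); destruct (Rle_dec x (lam m)); try (right; lra).
      left. apply term_lt; auto; lra. }
    split.
    - destruct (Req_dec (c m) (Rmin (lam m) C0)) as [E|E].
      + rewrite E. lra.
      + destruct (Hs _ E); [lra|tauto].
    - intros E. destruct (Hs _ E); [lra|tauto]. }
  assert (Hobj: forall c, objective M a b c = rsum M (fun m => phi a b (c m))) by reflexivity.
  assert (Hlin: forall c, feasible M lam xbar c -> rsum M (fun m => phi a b (Rmin (lam m) C0) + G a b C0 * (c m - Rmin (lam m) C0)) = objective M a b (fun m => Rmin (lam m) C0)).
  { intros c [Hc _]. rewrite (rsum_lin M (fun m => phi a b (Rmin (lam m) C0)) c (fun m => Rmin (lam m) C0)).
    rewrite Hc, Hsum, Hobj. ring. }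
  split.
  - intros c Hc. rewrite <- (Hlin c Hc), Hobj. apply rsum_le. intros m Hm. apply (Key c Hc m Hm).
  - intros c Hc Heq m Hm. destruct (Req_dec (c m) (Rmin (lam m) C0)) as [E|E]; auto.
    exfalso. assert (objective M a b c < objective M a b (fun m => Rmin (lam m) C0)); [|lra].
    rewrite <- (Hlin c Hc), Hobj. apply rsum_lt. intros k Hk. apply (Key c Hc k Hk).
    exists m. split; auto. apply (Key c Hc m Hm); auto.
Qed.
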